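(* Let $b>2$ and $d\in\{1,\dots,b-1\}$. Then $H^{(0)}>b\log b-b\log\!\left(1+\frac1d\right)$. Consequently $H^{(0)}>b\log(b/2)$.
   Context: For an integer $n\ge0$, $k(n)$ denotes the number of occurrences of the digit $d$ in the base-$b$ representation of $n$ without leading zeros. $H^{(0)}=\sum_{n\ge1,\ k(n)=0}1/n$ is the sum of reciprocals of positive integers whose base-$b$ representation does not contain the digit $d$. *)

(* Defs.v *)
From Stdlib Require Import Reals Arith.
From Coquelicot Require Import Coquelicot.
Open Scope R_scope.

(* Number of occurrences of digit d in the base-b representation of n
   (no leading zeros).  [fuel] bounds the recursion; fuel = n suffices. *)
Fixpoint digit_count_aux (fuel b d n : nat) : nat :=
  match fuel with
  | O => O
  | S f =>
      if Nat.eqb n 0 then O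
      else ((if Nat.eqb (Nat.modulo n b) d then 1 else 0)
            + digit_count_aux f b d (Nat.div n b))%nat
  end.

Definition digit_count (b d n : nat) : nat := digit_count_aux n b d n.

Definition kempner_term (b d n : nat) : R :=
  if (Nat.ltb 0 n && Nat.eqb (digit_count b d n) 0)%bool then / INR n else 0.

(* H^(0) = sum_{n>=1, k(n)=0} 1/n, as the limit (in Rbar) of the
   nondecreasing partial sums; this limit always exists in Rbar. *)
Definition H0 (b d : nat) : Rbar :=
  Lim_seq (fun N => sum_f_R0 (kempner_term b d) N).

(* Main.v *)
Require Import Defs.
From Stdlib Require Import Reals Arith Lia Lra.
From Coquelicot Require Import Coquelicot.
Open Scope R_scope.


Fixpoint rsum (n : nat) (f : nat -> R) : R :=
  match n with O => 0 | S n' => rsum n' f + f n' end.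

Lemma rsum_ext n f g : (forall i, (i < n)%nat -> f i = g i) -> rsum n f = rsum n g.
Proof. induction n; cbn [rsum]; intros H; auto. rewrite IHn by (intros; apply H; lia). rewrite H by lia. reflexivity. Qed.

Lemma rsum_le n f g : (forall i, (i < n)%nat -> f i <= g i) -> rsum n f <= rsum n g.
Proof. induction n; cbn [rsum]; intros H; [lra|]. apply Rplus_le_compat; [apply IHn; intros; apply H; lia| apply H; lia]. Qed.

Lemma rsum_zero n : rsum n (fun _ => 0) = 0.
Proof. induction n; cbn [rsum]; [reflexivity| rewrite IHn; ring]. Qed.

Lemma rsum_nonneg n f : (forall i, (i < n)%nat -> 0 <= f i) -> 0 <= rsum n f.
Proof. intros H. rewrite <- (rsum_zero n). apply rsum_le; auto. Qed.

Lemma rsum_add n f g : rsum n (fun i => f i + g i) = rsum n f + rsum n g.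
Proof. induction n; cbn [rsum]; [ring| rewrite IHn; ring]. Qed.
Lemma rsum_sub n f g : rsum n (fun i => f i - g i) = rsum n f - rsum n g.
Proof. induction n; cbn [rsum]; [ring| rewrite IHn; ring]. Qed.
Lemma rsum_scal n c f : rsum n (fun i => c * f i) = c * rsum n f.
Proof. induction n; cbn [rsum]; [ring| rewrite IHn; ring]. Qed.
Lemma rsum_const n c : rsum n (fun _ => c) = INR n * c.
Proof. induction n. simpl; ring. rewrite S_INR. cbn [rsum]. rewrite IHn; ring. Qed.

Lemma rsum_plus a c f : rsum (a + c) f = rsum a f + rsum c (fun i => f (a + i)%nat).
Proof. induction c; cbn [rsum]. rewrite Nat.add_0_r; ring. rewrite Nat.add_succ_r; cbn [rsum]; rewrite IHc; ring. Qed.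

Lemma rsum_mul n B f : rsum (n * B) f = rsum n (fun i => rsum B (fun t => f (i * B + t)%nat)).
Proof. induction n; cbn [rsum]. simpl; reflexivity. rewrite Nat.mul_succ_l, rsum_plus, IHn. reflexivity. Qed.

Lemma rsum_swap n m f : rsum n (fun i => rsum m (fun j => f i j)) = rsum m (fun j => rsum n (fun i => f i j)).
Proof. induction n; cbn [rsum]. rewrite rsum_zero; reflexivity. rewrite IHn, <- rsum_add. reflexivity. Qed.

Lemma rsum_tele n a : rsum n (fun k => a (S k) - a k) = a n - a O.
Proof. induction n; cbn [rsum]; [ring| rewrite IHn; ring]. Qed.

Lemma rsum_if n e f : (e < n)%nat -> rsum n (fun j => if Nat.eqb j e then 0 else f j) = rsum n f - f e.
Proof.
  induction n; intros H; [lia|]. cbn [rsum].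
  destruct (Nat.eq_dec e n) as [->|Hne].
  - rewrite Nat.eqb_refl. rewrite (rsum_ext n _ f). ring. intros i Hi. destruct (Nat.eqb_spec i n); [lia|reflexivity].
  - rewrite IHn by lia. destruct (Nat.eqb_spec n e); [lia|]. ring.
Qed.

Lemma rsum_pos n f i : (forall j, (j < n)%nat -> 0 <= f j) -> (i < n)%nat -> 0 < f i -> 0 < rsum n f.
Proof.
  induction n; intros H Hi Hf; [lia|]. cbn [rsum].
  destruct (Nat.eq_dec i n) as [->|Hne].
  - pose proof (rsum_nonneg n f (fun j Hj => H j ltac:(lia))). lra.
  - pose proof (IHn (fun j Hj => H j ltac:(lia)) ltac:(lia) Hf). pose proof (H n ltac:(lia)). lra.
Qed.

Lemma rsum_mono n k f : (forall i, 0 <= f i) -> rsum n f <= rsum (n + k) f.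
Proof. intros H. rewrite rsum_plus. pose proof (rsum_nonneg k (fun i => f (n+i)%nat) (fun i _ => H _)). lra. Qed.

Lemma sum_f_R0_rsum f N : sum_f_R0 f N = rsum (S N) f.
Proof. induction N; cbn [rsum sum_f_R0]. ring. rewrite IHN. cbn [rsum]. reflexivity. Qed.

Lemma dc_aux_fuel b d : (1 < b)%nat -> forall f1 f2 n, (n <= f1)%nat -> (n <= f2)%nat ->
  digit_count_aux f1 b d n = digit_count_aux f2 b d n.
Proof.
  intros Hb f1. induction f1 as [|f1 IH]; intros f2 n H1 H2.
  - assert (n = 0)%nat by lia. subst. destruct f2; reflexivity.
  - destruct f2 as [|f2].
    + assert (n=0)%nat by lia; subst; reflexivity.
    + cbn [digit_count_aux]. destruct (Nat.eqb_spec n 0); [reflexivity|].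
      assert (n / b < n)%nat by (apply Nat.div_lt; lia).
      f_equal. apply IH; lia.
Qed.

Lemma dc_step b d n : (1 < b)%nat -> (1 <= n)%nat ->
  digit_count b d n = ((if Nat.eqb (n mod b) d then 1 else 0) + digit_count b d (n / b))%nat.
Proof.
  intros Hb Hn. unfold digit_count. destruct n as [|n]; [lia|].
  cbn [digit_count_aux Nat.eqb]. f_equal.
  assert (S n / b < S n)%nat by (apply Nat.div_lt; lia).
  apply dc_aux_fuel; lia.
Qed.

Lemma dc_bmj b d m j : (1 < b)%nat -> (j < b)%nat -> (1 <= b*m+j)%nat ->
  digit_count b d (b*m+j) = ((if Nat.eqb j d then 1 else 0) + digit_count b d m)%nat.
Proof.
  intros Hb Hj Hn. rewrite dc_step by lia.
  rewrite <- (Nat.mod_unique (b*m+j) b m j), <- (Nat.div_unique (b*m+j) b m j); auto.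
Qed.

Definition Hs (b d N m : nat) : R :=
  rsum (S N) (fun k => rsum (b ^ k) (fun t => kempner_term b d (m * b ^ k + t))).

Lemma kt_nonneg b d n : 0 <= kempner_term b d n.
Proof. unfold kempner_term. destruct (Nat.ltb_spec 0 n); simpl; [|lra].
  destruct (Nat.eqb _ 0); [|lra]. apply Rlt_le, Rinv_0_lt_compat, lt_0_INR; lia. Qed.

Lemma kt_good b d m : (1 <= m)%nat -> digit_count b d m = 0%nat -> kempner_term b d m = / INR m.
Proof. intros H1 H2. unfold kempner_term. rewrite H2. destruct (Nat.ltb_spec 0 m); [|lia]. reflexivity. Qed.

Lemma Hs_nonneg b d N m : 0 <= Hs b d N m.
Proof. unfold Hs. apply rsum_nonneg; intros. apply rsum_nonneg; intros. apply kt_nonneg. Qed.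

Lemma Hs_rec b d N m : Hs b d (S N) m = kempner_term b d m + rsum b (fun j => Hs b d N (b*m+j)).
Proof.
  unfold Hs. replace (S (S N)) with (1 + S N)%nat by lia. rewrite rsum_plus.
  f_equal.
  - cbn [rsum]. rewrite Nat.pow_0_r. cbn [rsum]. rewrite Nat.mul_1_r, Nat.add_0_r. rewrite !Rplus_0_l; reflexivity.
  - rewrite (rsum_swap b (S N)). apply rsum_ext. intros k _.
    change (b ^ (1 + k))%nat with (b * b ^ k)%nat. rewrite rsum_mul.
    apply rsum_ext; intros j _. apply rsum_ext; intros t _. f_equal. ring.
Qed.

Lemma Hs_total b d N : (1 < b)%nat ->
  rsum (b - 1) (fun j => Hs b d N (S j)) = rsum (b ^ S N) (kempner_term b d).
Proof.
  intros Hb.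
  assert (A : rsum b (fun j => Hs b d N j) = rsum (S N) (fun k => rsum (b ^ (S k)) (kempner_term b d))).
  { unfold Hs. rewrite rsum_swap. apply rsum_ext; intros k _.
    change (b ^ S k)%nat with (b * b ^ k)%nat. rewrite rsum_mul. reflexivity. }
  assert (B : Hs b d N 0 = rsum (S N) (fun k => rsum (b ^ k) (kempner_term b d))).
  { reflexivity. }
  assert (C : rsum b (fun j => Hs b d N j) = Hs b d N 0 + rsum (b - 1) (fun j => Hs b d N (S j))).
  { pose proof (rsum_plus 1 (b-1) (fun j => Hs b d N j)) as E.
    replace (1 + (b - 1))%nat with b in E by lia. rewrite E. cbn [rsum]. rewrite Rplus_0_l; reflexivity. }
  assert (T := rsum_tele (S N) (fun k => rsum (b ^ k) (kempner_term b d))).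
  rewrite rsum_sub, <- A, <- B in T.
  assert (K0 : kempner_term b d 0 = 0) by reflexivity.
  cbn [rsum] in T. rewrite Nat.pow_0_r in T. cbn [rsum] in T. lra.
Qed.

Definition lnd (x : nat) : R := ln (INR (S x)) - ln (INR x).
Definition qq (b : nat) : R := (INR b - 1) / INR b.

Lemma ln_le_xm1 x : 0 < x -> ln x <= x - 1.
Proof. intros H. rewrite <- (ln_exp (x-1)). apply ln_le; auto. pose proof (exp_ineq1_le (x-1)); lra. Qed.

Lemma lnd_le x : (1 <= x)%nat -> lnd x <= / INR x.
Proof.
  intros Hx. unfold lnd. assert (0 < INR x) by (apply lt_0_INR; lia).
  assert (0 < INR (S x)) by (apply lt_0_INR; lia).
  rewrite <- ln_div by auto. eapply Rle_trans. apply ln_le_xm1. apply Rdiv_lt_0_compat; auto.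
  rewrite S_INR. right. field. lra.
Qed.

Lemma delta_pos b d m : (1 < b)%nat -> (1 <= d)%nat -> (1 <= m)%nat ->
  0 < / INR m - INR b * lnd (b*m+d).
Proof.
  intros Hb Hd Hm.
  assert (L := lnd_le (b*m+d) ltac:(lia)).
  assert (0 < INR b) by (apply lt_0_INR; lia).
  assert (0 < INR m) by (apply lt_0_INR; lia).
  assert (0 < INR d) by (apply lt_0_INR; lia).
  assert (INR b * lnd (b*m+d) <= INR b * / INR (b*m+d)) by (apply Rmult_le_compat_l; lra).
  rewrite plus_INR, mult_INR in *.
  assert (/ INR m - INR b * / (INR b * INR m + INR d) = INR d / (INR m * (INR b * INR m + INR d))).
  { field. split; [|lra]. nra. }
  assert (0 < INR d / (INR m * (INR b * INR m + INR d))).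
  { apply Rdiv_lt_0_compat; auto. nra. }
  lra.
Qed.

Lemma lnd_sum b m : (1 < b)%nat -> (1 <= m)%nat ->
  rsum b (fun j => lnd (b*m+j)) = lnd m.
Proof.
  intros Hb Hm.
  rewrite (rsum_ext b _ (fun k => (fun k => ln (INR (b*m+k))) (S k) - (fun k => ln (INR (b*m+k))) k)).
  2:{ intros i _. unfold lnd. rewrite Nat.add_succ_r. reflexivity. }
  rewrite (rsum_tele b (fun k => ln (INR (b*m+k)))). cbv beta. unfold lnd.
  assert (0 < INR b) by (apply lt_0_INR; lia).
  assert (0 < INR m) by (apply lt_0_INR; lia).
  replace (b*m+b)%nat with (b * S m)%nat by ring. rewrite Nat.add_0_r, !mult_INR.
  rewrite !ln_mult; auto. ring. apply lt_0_INR; lia.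
Qed.

Lemma step b d N m :
  (2 < b)%nat -> (1 <= d)%nat -> (d < b)%nat -> (1 <= m)%nat -> digit_count b d m = 0%nat ->
  (forall j, (j < b)%nat -> j <> d ->
     Hs b d N (b*m+j) >= INR b * lnd (b*m+j) - qq b ^ N * (INR b / INR (b*m+j))) ->
  Hs b d (S N) m >= INR b * lnd m + (/ INR m - INR b * lnd (b*m+d)) - qq b ^ (S N) * (INR b / INR m).
Proof.
  intros Hb Hd1 Hd2 Hm Hdc IH.
  assert (Bp : 0 < INR b) by (apply lt_0_INR; lia).
  assert (Mp : 0 < INR m) by (apply lt_0_INR; lia).
  assert (Q0 : 0 <= qq b). { unfold qq, Rdiv. assert (1 <= INR b) by (apply (le_INR 1); lia).
    apply Rmult_le_pos; [lra| left; apply Rinv_0_lt_compat; lra]. }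
  assert (QN : 0 <= qq b ^ N) by (apply pow_le; auto).
  rewrite Hs_rec, kt_good by auto.
  set (c := qq b ^ N * (INR b / INR (b*m))).
  assert (S1 : rsum b (fun j => Hs b d N (b*m+j)) >=
     rsum b (fun j => if Nat.eqb j d then 0 else INR b * lnd (b*m+j))
     - rsum b (fun j => if Nat.eqb j d then 0 else c)).
  { rewrite <- rsum_sub. apply Rle_ge, rsum_le. intros j Hj.
    destruct (Nat.eqb_spec j d). - rewrite Rminus_0_r. apply Hs_nonneg.
    - pose proof (IH j Hj n) as IHj. apply Rge_le in IHj. eapply Rle_trans; [|exact IHj]. unfold Rminus; apply Rplus_le_compat_l.
      apply Ropp_le_contravar. unfold c. apply Rmult_le_compat_l; auto.
      unfold Rdiv. apply Rmult_le_compat_l; [lra|]. apply Rinv_le_contravar.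
      apply lt_0_INR; nia. apply le_INR; lia. }
  rewrite !rsum_if in S1 by lia. rewrite rsum_scal, lnd_sum, rsum_const in S1 by lia.
  assert (E : INR b * c - c = qq b ^ S N * (INR b / INR m)).
  { unfold c, qq. rewrite mult_INR. cbn [pow]. field. lra. }
  lra.
Qed.

Lemma main_ind b d : (2 < b)%nat -> (1 <= d)%nat -> (d < b)%nat -> forall N m,
  (1 <= m)%nat -> digit_count b d m = 0%nat ->
  Hs b d N m >= INR b * lnd m - qq b ^ N * (INR b / INR m).
Proof.
  intros Hb Hd1 Hd2 N. induction N as [|N IHN]; intros m Hm Hdc.
  - unfold Hs. cbn [rsum]. rewrite Nat.pow_0_r. cbn [rsum]. rewrite Nat.mul_1_r, Nat.add_0_r.
    rewrite kt_good by auto. assert (L := lnd_le m Hm).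
    assert (0 < INR b) by (apply lt_0_INR; lia).
    assert (0 < / INR m) by (apply Rinv_0_lt_compat, lt_0_INR; lia).
    assert (INR b * lnd m <= INR b * / INR m) by (apply Rmult_le_compat_l; lra).
    cbn [pow]. unfold Rdiv. lra.
  - pose proof (step b d N m Hb Hd1 Hd2 Hm Hdc) as St.
    pose proof (delta_pos b d m ltac:(lia) Hd1 Hm).
    assert (Hs b d (S N) m >= INR b * lnd m + (/ INR m - INR b * lnd (b*m+d)) - qq b ^ (S N) * (INR b / INR m)).
    { apply St. intros j Hj Hjd. apply IHN. nia.
      rewrite dc_bmj by nia. destruct (Nat.eqb_spec j d); [lia|]. simpl. exact Hdc. }
    lra.
Qed.

Lemma dc_small b d j : (1 < b)%nat -> (1 <= j)%nat -> (j < b)%nat -> j <> d -> digit_count b d j = 0%nat.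
Proof.
  intros Hb Hj1 Hj2 Hjd. pose proof (dc_bmj b d 0 j Hb Hj2 ltac:(lia)) as E.
  rewrite Nat.mul_0_r, Nat.add_0_l in E. rewrite E. destruct (Nat.eqb_spec j d); [lia|]. reflexivity.
Qed.

Lemma if_pos (c : bool) (y : R) : c = false -> 0 < y -> 0 < (if c then 0 else y).
Proof. intros -> H; exact H. Qed.

Theorem mainTheorem4 (b d : nat) :
  (2 < b)%nat -> (1 <= d <= b - 1)%nat ->
  Rbar_lt (Finite (INR b * ln (INR b) - INR b * ln (1 + / INR d))) (H0 b d) /\
  Rbar_lt (Finite (INR b * ln (INR b / 2))) (H0 b d).
Proof.
  intros Hb [Hd1 Hd2].
  assert (Bp : 0 < INR b) by (apply lt_0_INR; lia).
  assert (Dp : 1 <= INR d) by (apply (le_INR 1); lia).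
  set (X := INR b * ln (INR b) - INR b * ln (1 + / INR d)).
  assert (HX2 : INR b * ln (INR b / 2) <= X).
  { unfold X. rewrite ln_div by lra.
    assert (/ INR d <= 1). { rewrite <- Rinv_1. apply Rinv_le_contravar; lra. }
    assert (0 < / INR d) by (apply Rinv_0_lt_compat; lra).
    assert (ln (1 + / INR d) <= ln 2) by (apply ln_le; lra).
    assert (INR b * ln (1 + / INR d) <= INR b * ln 2) by (apply Rmult_le_compat_l; lra).
    lra. }
  set (kt := kempner_term b d).
  set (A := rsum (b-1) (fun j => if Nat.eqb (S j) d then 0 else INR b * lnd (S j))).
  set (Dl := rsum (b-1) (fun j => if Nat.eqb (S j) d then 0 else / INR (S j) - INR b * lnd (b * S j + d))).
  set (C := rsum (b-1) (fun j => if Nat.eqb (S j) d then 0 else INR b / INR (S j))).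
  assert (Bound : forall N, rsum (b ^ S (S N)) kt >= A + Dl - qq b ^ (S N) * C).
  { intros N. unfold kt. rewrite <- Hs_total by lia. unfold A, Dl, C.
    rewrite <- rsum_scal, <- rsum_add, <- rsum_sub. apply Rle_ge, rsum_le. intros j Hj.
    destruct (Nat.eqb_spec (S j) d). - rewrite Rmult_0_r. replace (0+0-0) with 0 by ring. apply Hs_nonneg.
    - apply Rge_le. eapply Rge_trans.
      + apply (step b d N (S j)); try lia. apply dc_small; lia.
        intros j' Hj' Hne. apply main_ind; try nia.
        rewrite dc_bmj by nia. destruct (Nat.eqb_spec j' d); [lia|]. simpl. apply dc_small; lia.
      + right. ring. }
  assert (AX : A = X).
  { unfold A, X.
    rewrite (rsum_ext (b-1) _ (fun j => if Nat.eqb j (d-1) then 0 else INR b * lnd (S j))).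
    2:{ intros i _. destruct (Nat.eqb_spec (S i) d), (Nat.eqb_spec i (d-1)); try lia; reflexivity. }
    rewrite rsum_if by lia. rewrite rsum_scal.
    rewrite (rsum_ext (b-1) _ (fun k => (fun k => ln (INR (S k))) (S k) - (fun k => ln (INR (S k))) k)) by reflexivity.
    rewrite (rsum_tele (b-1) (fun k => ln (INR (S k)))). cbv beta.
    replace (S (b-1)) with b by lia. replace (S (d-1)) with d by lia.
    replace (INR 1) with 1 by reflexivity. rewrite ln_1. unfold lnd.
    replace (1 + / INR d) with (INR (S d) / INR d) by (rewrite S_INR; field; lra).
    rewrite ln_div by (try apply lt_0_INR; lra || lia). ring. }
  assert (Dlpos : 0 < Dl).
  { unfold Dl. apply (rsum_pos _ _ (if Nat.eqb d 1 then 1%nat else 0%nat)).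
    - intros j Hj. destruct (Nat.eqb (S j) d); [lra|]. left; apply delta_pos; lia.
    - destruct (Nat.eqb_spec d 1); lia.
    - destruct (Nat.eqb_spec d 1) as [->|Hne]; apply if_pos.
      + reflexivity.
      + exact (delta_pos b 1 2 ltac:(lia) ltac:(lia) ltac:(lia)).
      + apply Nat.eqb_neq. cbn. lia.
      + exact (delta_pos b d 1 ltac:(lia) Hd1 ltac:(lia)). }
  assert (Cnn : 0 <= C).
  { unfold C. apply rsum_nonneg. intros j _. destruct (Nat.eqb (S j) d); [lra|].
    unfold Rdiv. apply Rmult_le_pos; [lra|]. left; apply Rinv_0_lt_compat, lt_0_INR; lia. }
  assert (Q0 : 0 <= qq b). { unfold qq, Rdiv. assert (1 <= INR b) by (apply (le_INR 1); lia).
    apply Rmult_le_pos; [lra| left; apply Rinv_0_lt_compat; lra]. }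
  assert (Q1 : Rabs (qq b) < 1).
  { rewrite Rabs_pos_eq by auto. unfold qq. replace ((INR b - 1) / INR b) with (1 - / INR b) by (field; lra).
    assert (0 < / INR b) by (apply Rinv_0_lt_compat; lra). lra. }
  set (y := Dl / (C + 1)).
  assert (Yp : 0 < y) by (unfold y; apply Rdiv_lt_0_compat; lra).
  destruct (pow_lt_1_zero (qq b) Q1 y Yp) as [N0 HN0].
  specialize (HN0 (S N0) ltac:(lia)).
  assert (QP : 0 <= qq b ^ S N0) by (apply pow_le; auto).
  rewrite Rabs_pos_eq in HN0 by auto.
  assert (HyC : qq b ^ S N0 * C <= y * C) by (apply Rmult_le_compat_r; lra).
  assert (HyE : y * C = Dl - y) by (unfold y; field; lra).
  set (M := (b ^ S (S N0))%nat).
  assert (KM : X < rsum M kt).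
  { pose proof (Bound N0) as HB. fold M in HB. lra. }
  assert (Main : Rbar_lt (Finite X) (H0 b d)).
  { apply Rbar_lt_le_trans with (Finite (sum_f_R0 kt M)).
    - simpl. rewrite sum_f_R0_rsum. pose proof (rsum_mono M 1 kt (kt_nonneg b d)) as HM.
      replace (M + 1)%nat with (S M) in HM by lia. lra.
    - unfold H0. rewrite <- (Lim_seq_const (sum_f_R0 kt M)). apply Lim_seq_le_loc.
      exists M. intros n Hn. fold kt. rewrite !sum_f_R0_rsum.
      replace (S n) with (S M + (n - M))%nat by lia. apply rsum_mono. apply kt_nonneg. }
  split; [exact Main|].
  eapply Rbar_le_lt_trans; [|exact Main]. simpl. exact HX2.
Qed.
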